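(* Let $X,Y$ be finite sets with $Y\neq\emptyset$, let $A\in\{-1,1\}^{X\times Y}$ with $\operatorname{Ldim}(A)=d$, and let $\varepsilon\in(0,1/2)$. Then there exist a function $\sigma:X\to\{-1,1\}$ and a subset $S\subseteq Y$ with $|S|\ge \varepsilon^d|Y|$ such that for every $x\in X$, $$\Pr_{y\in S}\bigl[A(x,y)\ne \sigma(x)\bigr]\le \varepsilon,$$ where $y$ is uniform in $S$.
   Context: A mistake tree of depth $d$ over a domain $X$ is a complete binary tree of depth $d$ in which each internal node $\nu$ is labelled with an element $x(\nu)\in X$, and each edge $e$ from a node to a child is labelled with a sign $\sigma(e)\in\{-1,1\}$, where $-1$ indicates the left child and $+1$ the right child. A matrix $A\in\{-1,1\}^{X\times Y}$ shatters a mistake tree of depth $d$ over $X$ if for every root-to-leaf path $(\nu_1,\dots,\nu_{d+1})$ there is a column $y\in Y$ with $A(x(\nu_i),y)=\sigma(\nu_i\nu_{i+1})$ for all $i\in[d]$. The Littlestone dimension $\operatorname{Ldim}(A)$ is the largest $d$ such that $A$ shatters some mistake tree of depth $d$ over $X$ (a tree of depth $0$ is always shattered when $Y\ne\emptyset$). *)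

(* Defs.v *)
From mathcomp Require Import all_boot all_order all_algebra.
Set Implicit Arguments. Unset Strict Implicit. Unset Printing Implicit Defensive.

(* Sign convention: a sign in {-1,1} is encoded as a bool, true = +1 (right
   child), false = -1 (left child).  A matrix A in {-1,1}^{X x Y} is a
   function A : X -> Y -> bool. *)

Inductive mtree (X : Type) : Type :=
| MLeaf : mtree X
| MNode : X -> mtree X -> mtree X -> mtree X.
Arguments MLeaf {X}.

Fixpoint mdepth_is (X : Type) (t : mtree X) (d : nat) : bool :=
  match t, d with
  | MLeaf, 0 => true
  | MNode _ l r, d'.+1 => mdepth_is l d' && mdepth_is r d'
  | _, _ => false
  end.

Fixpoint mpath (X : Type) (t : mtree X) (s : seq bool) : option (seq (X * bool)) :=
  match t, s with
  | MLeaf, [::] => Some [::]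
  | MNode x l r, b :: s' =>
      match mpath (if b then r else l) s' with
      | Some p => Some ((x, b) :: p)
      | None => None
      end
  | _, _ => None
  end.

Definition shatters (X Y : Type) (A : X -> Y -> bool) (t : mtree X) : Prop :=
  forall (s : seq bool) (p : seq (X * bool)), mpath t s = Some p ->
    exists y : Y, all (fun xb : X * bool => A xb.1 y == xb.2) p.

Definition Ldim_eq (X Y : Type) (A : X -> Y -> bool) (d : nat) : Prop :=
  (exists t : mtree X, mdepth_is t d /\ shatters A t) /\
  (forall (d' : nat) (t : mtree X), mdepth_is t d' -> shatters A t -> (d' <= d)%N).

(* Main.v *)
Require Import Defs.
From mathcomp Require Import all_boot all_order all_algebra.
From Stdlib Require Import Classical.
From mathcomp Require Import lra.
Import Order.TTheory GRing.Theory Num.Theory.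
Local Open Scope ring_scope.
Set Implicit Arguments. Unset Strict Implicit. Unset Printing Implicit Defensive.

Definition shS (X Y : finType) (A : X -> Y -> bool) (S0 : {set Y}) (t : mtree X) : Prop :=
  forall s p, mpath t s = Some p ->
    exists2 y, y \in S0 & all (fun xb : X * bool => A xb.1 y == xb.2) p.

Definition res (R : realFieldType) (X Y : finType) (A : X -> Y -> bool) (eps : R)
  (S0 : {set Y}) (k : nat) : Prop :=
  exists (sigma : X -> bool) (S : {set Y}), S \subset S0 /\
    eps ^+ k * #|S0|%:R <= #|S|%:R /\
    (forall x, #|[set y in S | A x y != sigma x]|%:R <= eps * #|S|%:R).

Definition Sb (X Y : finType) (A : X -> Y -> bool) (S0 : {set Y}) x b :=
  [set y in S0 | A x y == b].

Lemma good_case (R : realFieldType) (X Y : finType) (A : X -> Y -> bool) (eps : R)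
  (S0 : {set Y}) k : 0 <= eps -> eps <= 1 ->
  ~ (exists x, eps * #|S0|%:R < #|Sb A S0 x true|%:R /\
               eps * #|S0|%:R < #|Sb A S0 x false|%:R) ->
  res A eps S0 k.
Proof.
move=> e0 e1 H.
exists (fun x => eps * #|S0|%:R < #|Sb A S0 x true|%:R), S0.
split; first exact: subxx.
split.
  rewrite -[leRHS]mul1r ler_wpM2r //; exact: exprn_ile1.
move=> x.
have -> : [set y in S0 | A x y != (eps * #|S0|%:R < #|Sb A S0 x true|%:R)]
   = Sb A S0 x (~~ (eps * #|S0|%:R < #|Sb A S0 x true|%:R)).
  by apply/setP=> y; rewrite !inE; case: (A x y); case: (_ < _).
case: ltP => h /=.
  rewrite leNgt; apply/negP=> h2; apply: H; exists x; split=> //.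
exact: h.
Qed.

Lemma big_Sb (R : realFieldType) (X Y : finType) (A : X -> Y -> bool) (eps : R)
  (S0 : {set Y}) x b :
  eps * #|S0|%:R < #|Sb A S0 x true|%:R ->
  eps * #|S0|%:R < #|Sb A S0 x false|%:R ->
  eps * #|S0|%:R < #|Sb A S0 x b|%:R.
Proof. by case: b. Qed.

Lemma node_sh (X Y : finType) (A : X -> Y -> bool) (S0 : {set Y}) x tF tT :
  shS A (Sb A S0 x false) tF -> shS A (Sb A S0 x true) tT ->
  shS A S0 (MNode x tF tT).
Proof.
move=> hF hT [|b s] p //=.
case E: (mpath _ s) => [p'|] // [<-].
have [y] : exists2 y, y \in Sb A S0 x b & all (fun xb : X * bool => A xb.1 y == xb.2) p'.
  by case: b E => E; [apply: hT E | apply: hF E].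
rewrite inE => /andP[yS /eqP Ab] hall.
by exists y => //=; rewrite Ab eqxx.
Qed.

Lemma main_ind (R : realFieldType) (X Y : finType) (A : X -> Y -> bool) (eps : R) :
  0 <= eps -> eps <= 1 -> forall k (S0 : {set Y}),
  (forall t, mdepth_is t k.+1 -> ~ shS A S0 t) -> res A eps S0 k.
Proof.
move=> e0 e1; elim=> [|k IH] S0 Hns.
  apply: good_case => // -[x [hT hF]].
  have ne b : (0 < #|Sb A S0 x b|)%N.
    have : 0 < (#|Sb A S0 x b|%:R : R).
      apply: le_lt_trans (big_Sb b hT hF); exact: mulr_ge0.
    by rewrite ltr0n.
  apply: (Hns (MNode x MLeaf MLeaf)) => //.
  apply: node_sh => -[|? ?] p //= [<-].
    by case/card_gt0P: (ne false) => y yS; exists y.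
  by case/card_gt0P: (ne true) => y yS; exists y.
case: (classic (exists x, eps * #|S0|%:R < #|Sb A S0 x true|%:R /\
               eps * #|S0|%:R < #|Sb A S0 x false|%:R)) => [[x [hT hF]]|H];
  last exact: good_case.
have [b Hb] : exists b, forall t, mdepth_is t k.+1 -> ~ shS A (Sb A S0 x b) t.
  apply: NNPP => Hn.
  have Hb b : exists t, mdepth_is t k.+1 /\ shS A (Sb A S0 x b) t.
    apply: NNPP => Hn2; apply: Hn; exists b => t dt st; apply: Hn2; by exists t.
  case: (Hb false) => tF [dF sF]; case: (Hb true) => tT [dT sT].
  by apply: (Hns (MNode x tF tT)); [rewrite /= dF dT | apply: node_sh].
case: (IH _ Hb) => sigma [S [sub [card bad]]].
rewrite /res; exists sigma, S; split.
  apply: subset_trans sub _; apply/subsetP=> y; rewrite inE; by case/andP.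
split=> //.
apply: (le_trans _ card); rewrite exprSr -mulrA ler_wpM2l ?exprn_ge0 //.
exact: ltW (big_Sb b hT hF).
Qed.

Theorem proposition2p1 (R : realFieldType) (X Y : finType)
    (A : X -> Y -> bool) (d : nat) (eps : R) :
  (0 < #|Y|)%N ->
  Ldim_eq A d ->
  0 < eps -> eps < 1 / 2 ->
  exists (sigma : X -> bool) (S : {set Y}),
    eps ^+ d * #|Y|%:R <= #|S|%:R /\
    (forall x : X,
       #|[set y in S | A x y != sigma x]|%:R / #|S|%:R <= eps).
Proof.
move=> Y0 [_ Hmax] e0 e2.
have e1 : eps <= 1 by lra.
have := @main_ind R X Y A eps (ltW e0) e1 d setT.
case.
  move=> t dt st; have := Hmax _ t dt.
  have sh : shatters A t.
    by move=> s p E; case: (st s p E) => y _ h; exists y.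
  by move/(_ sh); rewrite ltnn.
move=> sigma [S [_ [card bad]]].
exists sigma, S; split; first by rewrite -cardsT.
move=> x; have [S0|Spos] := eqVneq #|S| 0%N.
  by rewrite S0 invr0 mulr0; exact: ltW.
by rewrite ler_pdivrMr ?ltr0n ?lt0n.
Qed.
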